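(* Let $\mu$ be a pure-state ensemble on $\mathbb{C}^d$ (a probability measure on unit vectors $|\psi\rangle\in\mathbb{C}^d$). For each information value $I$ that is achieved by some measurement procedure, let $D(I)$ be the infimum of the average disturbance $\overline{D}$ over all measurement procedures whose information gain about $\mu$ equals $I$. Then the information-disturbance frontier $I\mapsto D(I)$ is convex (defined on a convex set of achievable information values, with $\lambda D(I_1)+(1-\lambda)D(I_2)\ge D(\lambda I_1+(1-\lambda)I_2)$ for $\lambda\in[0,1]$).
   Context: A measurement procedure on $\mathbb{C}^d$ consists of a finite POVM $\{F_b\}$ (positive semidefinite operators with $\sum_b F_b=I$) together with operators $A_{bi}$ (finitely many for each $b$) satisfying $\sum_i A_{bi}^\dagger A_{bi}=F_b$; outcome $b$ transforms $\rho$ into the unnormalized state $\mathcal{A}_b(\rho)=\sum_i A_{bi}\rho A_{bi}^\dagger$. Given a pure-state ensemble $\mu$: outcome probabilities are $p(b|\psi)=\langle\psi|F_b|\psi\rangle$ and $p(b)=\int d\mu(\psi)\,p(b|\psi)$; the information gain is the mutual information $H(B:\Psi)=H(B)-H(B|\Psi)$ with $H(B)=-\sum_b p(b)\log p(b)$ and $H(B|\Psi)=-\int d\mu(\psi)\sum_b p(b|\psi)\log p(b|\psi)$. The average disturbance is $\overline{D}=1-\int d\mu(\psi)\sum_{b,i}|\langle\psi|A_{bi}|\psi\rangle|^2$. *)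

(* Defs.v *)
From HB Require Import structures.
From mathcomp Require Import all_boot all_algebra.
From mathcomp Require Import complex.
From mathcomp Require Import all_classical all_reals all_analysis.
Set Implicit Arguments. Unset Strict Implicit. Unset Printing Implicit Defensive.
Import GRing.Theory Num.Theory.
Local Open Scope ring_scope.
Local Open Scope classical_set_scope.

Section QDefs.
Variables (R : realType) (d : nat).

Definition adjmx m n (A : 'M[R[i]]_(m, n)) : 'M[R[i]]_(n, m) :=
  (map_mx (@conjc R) A)^T.

Definition qexp (psi : 'cV[R[i]]_d) (M : 'M[R[i]]_d) : R[i] :=
  (adjmx psi *m M *m psi) 0 0.

Definition sqmod (z : R[i]) : R := complex.Re z ^+ 2 + complex.Im z ^+ 2.

(** x log x (natural log; 0 log 0 = 0 since 0 * _ = 0). *)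
Definition xlogx (x : R) : R := x * ln x.

Record mproc := MProc {
  mp_m : nat;
  mp_k : 'I_mp_m -> nat;
  mp_A : forall b : 'I_mp_m, 'I_(mp_k b) -> 'M[R[i]]_d
}.

Definition povm (M : mproc) (b : 'I_(mp_m M)) : 'M[R[i]]_d :=
  \sum_(i < mp_k b) (adjmx (mp_A i) *m mp_A i).

Definition valid_mproc (M : mproc) : Prop :=
  \sum_(b < mp_m M) povm b = 1%:M.

Definition pcond (M : mproc) (psi : 'cV[R[i]]_d) (b : 'I_(mp_m M)) : R :=
  complex.Re (qexp psi (povm b)).

Variables (dT : measure_display) (T : measurableType dT)
          (P : probability T R) (psi : T -> 'cV[R[i]]_d).
(* The ensemble mu is the law of psi under P. *)

Definition pout (M : mproc) (b : 'I_(mp_m M)) : R :=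
  Rintegral P setT (fun t => pcond (psi t) b).

Definition H_B (M : mproc) : R := - \sum_(b < mp_m M) xlogx (pout b).

Definition H_B_Psi (M : mproc) : R :=
  - Rintegral P setT (fun t => \sum_(b < mp_m M) xlogx (pcond (psi t) b)).

Definition info_gain (M : mproc) : R := H_B M - H_B_Psi M.

Definition avg_disturbance (M : mproc) : R :=
  1 - Rintegral P setT
        (fun t => \sum_(b < mp_m M) \sum_(i < mp_k b) sqmod (qexp (psi t) (mp_A i))).

Definition achievable (I : R) : Prop :=
  exists M : mproc, valid_mproc M /\ info_gain M = I.

Definition frontier (I : R) : R :=
  inf [set avg_disturbance M | M in [set M : mproc | valid_mproc M /\ info_gain M = I]].

End QDefs.

(* Main.v *)
Require Import Defs.
From HB Require Import structures.
From mathcomp Require Import all_boot all_algebra.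
From mathcomp Require Import complex.
From mathcomp Require Import all_classical all_reals all_analysis.
From mathcomp Require Import ring lra.
From mathcomp Require Import measurable_realfun.
From mathcomp Require Import order.
Import Order.TTheory GRing.Theory Num.Theory.
Local Open Scope ring_scope.
Local Open Scope classical_set_scope.

Section Mix.
Context {R : realType} {d : nat}.
Local Notation MP := (mproc R d).

Definition mixk (M1 M2 : MP) (b : 'I_(mp_m M1 + mp_m M2)) : nat :=
  match fintype.split b with inl b1 => mp_k b1 | inr b2 => mp_k b2 end.

Definition mixA (c1 c2 : R[i]) (M1 M2 : MP) (b : 'I_(mp_m M1 + mp_m M2)) :
   'I_(mixk M1 M2 b) -> 'M[R[i]]_d :=
  match fintype.split b as s return
    'I_(match s with inl b1 => mp_k b1 | inr b2 => mp_k b2 end) -> 'M[R[i]]_d with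
  | inl b1 => fun i => c1 *: mp_A i
  | inr b2 => fun i => c2 *: mp_A i end.

Definition mix c1 c2 M1 M2 : MP := @MProc R d _ (mixk M1 M2) (mixA c1 c2 M1 M2).

Lemma mix_sumL (V : zmodType) c1 c2 M1 M2 (G : 'M[R[i]]_d -> V) (b : 'I_(mp_m M1)) :
  \sum_(i < @mp_k R d (mix c1 c2 M1 M2) (lshift (mp_m M2) b)) G (mp_A i) =
  \sum_(i < mp_k b) G (c1 *: mp_A i).
Proof.
rewrite /= /mixk /mixA.
have := @unsplitK _ (mp_m M2) (inl b); rewrite /=.
move: (lshift (mp_m M2) b) => x.
case: (fintype.split x) => // b1 [->] //.
Qed.

Lemma mix_sumR (V : zmodType) c1 c2 M1 M2 (G : 'M[R[i]]_d -> V) (b : 'I_(mp_m M2)) :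
  \sum_(i < @mp_k R d (mix c1 c2 M1 M2) (rshift (mp_m M1) b)) G (mp_A i) =
  \sum_(i < mp_k b) G (c2 *: mp_A i).
Proof.
rewrite /= /mixk /mixA.
have := @unsplitK (mp_m M1) _ (inr b); rewrite /=.
move: (rshift (mp_m M1) b) => x.
case: (fintype.split x) => // b1 [->] //.
Qed.
Local Notation C := (R[i]).
Implicit Types (psi : 'cV[C]_d) (A B : 'M[C]_d).

Lemma adjmxD m n (A B : 'M[C]_(m,n)) : adjmx (A + B) = adjmx A + adjmx B.
Proof. by apply/matrixP => i j; rewrite !mxE rmorphD. Qed.
Lemma adjmxN m n (A : 'M[C]_(m,n)) : adjmx (- A) = - adjmx A.
Proof. by apply/matrixP => i j; rewrite !mxE rmorphN. Qed.
Lemma adjmxZ m n c (A : 'M[C]_(m,n)) : adjmx (c *: A) = (conjc c) *: adjmx A.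
Proof. by apply/matrixP => i j; rewrite !mxE rmorphM. Qed.
Lemma adjmxM m n p (A : 'M[C]_(m,n)) (B : 'M[C]_(n,p)) :
  adjmx (A *m B) = adjmx B *m adjmx A.
Proof. by rewrite /adjmx map_mxM trmx_mul. Qed.
Lemma adjmx00 (A : 'M[C]_1) : adjmx A 0 0 = conjc (A 0 0).
Proof. by rewrite !mxE. Qed.

Lemma qexpD psi A B : qexp psi (A + B) = qexp psi A + qexp psi B.
Proof. by rewrite /qexp mulmxDr mulmxDl mxE. Qed.
Lemma qexpZ psi c A : qexp psi (c *: A) = c * qexp psi A.
Proof. by rewrite /qexp -scalemxAr -scalemxAl mxE. Qed.
Lemma qexp0 psi : qexp psi 0 = 0.
Proof. by rewrite /qexp mulmx0 mul0mx mxE. Qed.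
Lemma qexp_sum psi I (s : seq I) (F : I -> 'M[C]_d) :
  qexp psi (\sum_(i <- s) F i) = \sum_(i <- s) qexp psi (F i).
Proof.
elim: s => [|x s IH]; first by rewrite !big_nil qexp0.
by rewrite !big_cons qexpD IH.
Qed.

Definition nrm n (u : 'cV[C]_n) : C := (adjmx u *m u) 0 0.
Arguments nrm {n}.
Lemma nrm_ge0 n (u : 'cV[C]_n) : 0 <= nrm u.
Proof.
rewrite /nrm mxE; apply: sumr_ge0 => j _; rewrite !mxE mulrC.
exact: mulcJ_ge0.
Qed.

Lemma qexp_AA psi A : qexp psi (adjmx A *m A) = nrm (A *m psi).
Proof. by rewrite /qexp /nrm adjmxM !mulmxA. Qed.

Lemma sqmodE (z : C) : real_complex R (sqmod z) = z * conjc z.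
Proof.
case: z => a b; rewrite /sqmod /=; apply/eqP; rewrite eq_complex /=; apply/andP; split; apply/eqP.
  by rewrite !expr2; ring.
by ring.
Qed.

Lemma adjmxK m n (X : 'M[C]_(m,n)) : adjmx (adjmx X) = X.
Proof. by apply/matrixP => i j; rewrite !mxE conjcK. Qed.

Lemma CS psi A : adjmx psi *m psi = 1%:M ->
  qexp psi A * conjc (qexp psi A) <= qexp psi (adjmx A *m A).
Proof.
move=> hu; set z := qexp psi A.
have e1 : adjmx (A *m psi) *m (A *m psi) = (qexp psi (adjmx A *m A))%:M.
  by rewrite qexp_AA /nrm -mx11_scalar.
have e2 : adjmx psi *m (A *m psi) = z%:M by rewrite /z /qexp mulmxA -mx11_scalar.
have e3 : adjmx (A *m psi) *m psi = (conjc z)%:M.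
  rewrite -[X in _ *m X]adjmxK -adjmxM e2.
  by apply/matrixP => i j; rewrite !ord1 !mxE /= rmorphMn.
have := @nrm_ge0 d (A *m psi - z *: psi).
rewrite /nrm adjmxD adjmxN adjmxZ mulmxDl mulmxDr mulmxDr !mulNmx !mulmxN.
rewrite -!scalemxAl -!scalemxAr hu e1 e2 e3 !mxE eqxx /= !mulr1 => h.
rewrite -subr_ge0; apply: le_trans h _; rewrite le_eqVlt; apply/orP; left.
apply/eqP; rewrite !mulr1n; ring.
Qed.

Lemma ReD (x y : C) : complex.Re (x + y) = complex.Re x + complex.Re y.
Proof. by case: x; case: y. Qed.
Lemma Re0 : complex.Re (0 : C) = 0. Proof. by []. Qed.
Lemma Re_sum I (s : seq I) (p : pred I) (F : I -> C) :
  complex.Re (\sum_(i <- s | p i) F i) = \sum_(i <- s | p i) complex.Re (F i).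
Proof. exact: (big_morph _ ReD Re0). Qed.
Lemma qexp_sumP psi I (s : seq I) (p : pred I) (F : I -> 'M[C]_d) :
  qexp psi (\sum_(i <- s | p i) F i) = \sum_(i <- s | p i) qexp psi (F i).
Proof. exact: (big_morph _ (qexpD psi) (qexp0 psi)). Qed.
Lemma Re_ge0 (x : C) : 0 <= x -> 0 <= complex.Re x.
Proof. by rewrite lecE /= => /andP[]. Qed.
Lemma Re_le (x y : C) : x <= y -> complex.Re x <= complex.Re y.
Proof. by rewrite lecE /= => /andP[]. Qed.
Lemma ReM_real (a : R) (y : C) : complex.Re (real_complex R a * y) = a * complex.Re y.
Proof. by case: y => u v /=; ring. Qed.

Lemma sqmod_ge0 (z : C) : 0 <= sqmod z.
Proof. by rewrite /sqmod addr_ge0 // sqr_ge0. Qed.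

Lemma sqmodM_real (a : R) (z : C) : sqmod (real_complex R a * z) = a ^+ 2 * sqmod z.
Proof. by case: z => u v; rewrite /sqmod /=; ring. Qed.

Lemma sqmod_le psi A : adjmx psi *m psi = 1%:M ->
  sqmod (qexp psi A) <= complex.Re (qexp psi (adjmx A *m A)).
Proof.
move=> hu; have := @CS psi A hu; rewrite -sqmodE => /Re_le //=.
Qed.

Lemma qexp_AA_ge0 psi A : 0 <= complex.Re (qexp psi (adjmx A *m A)).
Proof. by rewrite qexp_AA; apply: Re_ge0; apply: nrm_ge0. Qed.

Lemma pcond_ge0 (M : mproc R d) psi (b : 'I_(mp_m M)) : 0 <= pcond psi b.
Proof.
rewrite /pcond /povm qexp_sumP Re_sum; apply: sumr_ge0 => i _.
exact: qexp_AA_ge0.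
Qed.

Lemma qexp1 psi : adjmx psi *m psi = 1%:M -> qexp psi 1%:M = 1.
Proof. by move=> hu; rewrite /qexp mulmx1 hu mxE. Qed.

Lemma pcond_sum (M : mproc R d) psi : valid_mproc M -> adjmx psi *m psi = 1%:M ->
  \sum_(b < mp_m M) pcond psi b = 1.
Proof.
move=> hv hu; rewrite /pcond -Re_sum -qexp_sumP.
by rewrite [X in qexp _ X]hv qexp1.
Qed.

Arguments pcond_sum {M psi}.
Lemma pcond_le1 (M : mproc R d) psi (b : 'I_(mp_m M)) : valid_mproc M -> adjmx psi *m psi = 1%:M ->
  pcond psi b <= 1.
Proof.
move=> hv hu; rewrite -(pcond_sum hv hu) (bigD1 b) //= lerDl.
by apply: sumr_ge0 => i _; apply: pcond_ge0.
Qed.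

Lemma sqmod_le_pcond (M : mproc R d) psi (b : 'I_(mp_m M)) (i : 'I_(mp_k b)) :
  adjmx psi *m psi = 1%:M ->
  sqmod (qexp psi (mp_A i)) <= pcond psi b.
Proof.
move=> hu; apply: (le_trans (@sqmod_le psi _ hu)).
rewrite /pcond /povm qexp_sumP Re_sum (bigD1 i) //= lerDl.
by apply: sumr_ge0 => j _; apply: qexp_AA_ge0.
Qed.

Lemma dist_sum_le1 (M : mproc R d) psi : valid_mproc M -> adjmx psi *m psi = 1%:M ->
  \sum_(b < mp_m M) \sum_(i < mp_k b) sqmod (qexp psi (mp_A i)) <= 1.
Proof.
move=> hv hu; rewrite -(pcond_sum hv hu); apply: ler_sum => b _.
rewrite /pcond /povm qexp_sumP Re_sum; apply: ler_sum => i _.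
exact: sqmod_le.
Qed.

Lemma dist_sum_ge0 (M : mproc R d) psi :
  0 <= \sum_(b < mp_m M) \sum_(i < mp_k b) sqmod (qexp psi (mp_A i)).
Proof. by apply: sumr_ge0 => b _; apply: sumr_ge0 => i _; apply: sqmod_ge0. Qed.

End Mix.

Section Mix2.
Variables (R : realType) (d : nat) (lam : R) (M1 M2 : mproc R d).
Hypothesis hl : 0 <= lam <= 1.
Local Notation C := (R[i]).
Definition cL := real_complex R (Num.sqrt lam).
Definition cR := real_complex R (Num.sqrt (1 - lam)).
Definition mixM := @mix R d cL cR M1 M2.

Lemma lam_ge0 : 0 <= lam. Proof. by case/andP: hl. Qed.
Lemma lamc_ge0 : 0 <= 1 - lam. Proof. by case/andP: hl => _; rewrite subr_ge0. Qed.

Lemma csq (a : R) : 0 <= a ->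
  conjc (real_complex R (Num.sqrt a)) * real_complex R (Num.sqrt a) = real_complex R a.
Proof. by move=> ha; rewrite conjc_real -rmorphM -expr2 sqr_sqrtr. Qed.

Lemma povm_scale (c : C) (X : 'M[C]_d) :
  adjmx (c *: X) *m (c *: X) = (conjc c * c) *: (adjmx X *m X).
Proof. by rewrite adjmxZ -scalemxAl -scalemxAr scalerA. Qed.

Lemma povm_mixL (b : 'I_(mp_m M1)) :
  povm (M:=mixM) (lshift (mp_m M2) b) = real_complex R lam *: povm b.
Proof.
rewrite /povm (@mix_sumL R d _ cL cR M1 M2 (fun X => adjmx X *m X) b).
rewrite scaler_sumr; apply: eq_bigr => i _.
by rewrite povm_scale csq // lam_ge0.
Qed.

Lemma povm_mixR (b : 'I_(mp_m M2)) :
  povm (M:=mixM) (rshift (mp_m M1) b) = real_complex R (1 - lam) *: povm b.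
Proof.
rewrite /povm (@mix_sumR R d _ cL cR M1 M2 (fun X => adjmx X *m X) b).
rewrite scaler_sumr; apply: eq_bigr => i _.
by rewrite povm_scale csq // lamc_ge0.
Qed.

Lemma valid_mix : valid_mproc M1 -> valid_mproc M2 -> valid_mproc mixM.
Proof.
rewrite /valid_mproc => h1 h2.
rewrite big_split_ord /=.
under eq_bigr do rewrite povm_mixL.
under [X in _ + X = _]eq_bigr do rewrite povm_mixR.
rewrite -!scaler_sumr h1 h2 -scalerDl -rmorphD addrC subrK.
by rewrite rmorph1 scale1r.
Qed.

Lemma pcond_mixL psi (b : 'I_(mp_m M1)) :
  pcond (M:=mixM) psi (lshift (mp_m M2) b) = lam * pcond psi b.
Proof. by rewrite /pcond povm_mixL qexpZ ReM_real. Qed.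

Lemma pcond_mixR psi (b : 'I_(mp_m M2)) :
  pcond (M:=mixM) psi (rshift (mp_m M1) b) = (1 - lam) * pcond psi b.
Proof. by rewrite /pcond povm_mixR qexpZ ReM_real. Qed.

Lemma dist_mix psi :
  \sum_(b < mp_m mixM) \sum_(i < mp_k b) sqmod (qexp psi (mp_A i)) =
  lam * \sum_(b < mp_m M1) \sum_(i < mp_k b) sqmod (qexp psi (mp_A i)) +
  (1 - lam) * \sum_(b < mp_m M2) \sum_(i < mp_k b) sqmod (qexp psi (mp_A i)).
Proof.
rewrite big_split_ord /= !mulr_sumr; congr (_ + _); apply: eq_bigr => b _.
  rewrite (@mix_sumL R d _ cL cR M1 M2 (fun X => sqmod (qexp psi X)) b) mulr_sumr.
  apply: eq_bigr => i _; rewrite qexpZ sqmodM_real sqr_sqrtr //; exact: lam_ge0.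
rewrite (@mix_sumR R d _ cL cR M1 M2 (fun X => sqmod (qexp psi X)) b) mulr_sumr.
apply: eq_bigr => i _; rewrite qexpZ sqmodM_real sqr_sqrtr //; exact: lamc_ge0.
Qed.
End Mix2.

Section XL.
Variable R : realType.
Lemma xlogx0 : xlogx (0 : R) = 0. Proof. by rewrite /xlogx mul0r. Qed.
Lemma xlogxM (l x : R) : 0 <= l -> 0 <= x -> xlogx (l * x) = l * x * ln l + l * xlogx x.
Proof.
rewrite !le_eqVlt => /predU1P[<-|l0]; first by rewrite ?(mulr0, mul0r, xlogx0, addr0, add0r).
move=> /predU1P[<-|x0]; first by rewrite ?(mulr0, mul0r, xlogx0, addr0, add0r).
by rewrite /xlogx lnM ?posrE //; ring.
Qed.
Lemma xlogx_bnd (x : R) : 0 <= x <= 1 -> `|xlogx x| <= 1.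
Proof.
case/andP; rewrite le_eqVlt => /predU1P[<-|x0] x1; first by rewrite xlogx0 normr0.
have hl : ln x <= 0 by apply: ln_le0.
rewrite /xlogx ler0_norm; last by rewrite mulr_ge0_le0 // ltW.
have hv : ln x^-1 <= x^-1 - 1.
  have hi : 0 < x^-1 by rewrite invr_gt0.
  have h := @le_ln1Dx R (x^-1 - 1); have e : 1 + (x^-1 - 1) = x^-1 by ring.
  rewrite e in h; apply: h; lra.
rewrite lnV ?posrE // in hv.
have : x * - ln x <= x * (x^-1 - 1) by rewrite ler_wpM2l // ltW.
rewrite mulrBr mulfV ?gt_eqF // mulr1 mulrN => h.
by apply: (le_trans h); rewrite lerBlDr lerDl ltW.
Qed.
End XL.

Section Ana.
Variables (R : realType) (d : nat) (dT : measure_display) (T : measurableType dT)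
  (P : probability T R) (psi : T -> 'cV[R[i]]_d).
Hypothesis hu : forall t, adjmx (psi t) *m psi t = 1%:M.
Hypothesis hm : forall j : 'I_d,
     measurable_fun setT (fun t => complex.Re (psi t j 0)) /\
     measurable_fun setT (fun t => complex.Im (psi t j 0)).
Local Notation C := (R[i]).

Definition cm (g : T -> C) := measurable_fun setT (fun t => complex.Re (g t)) /\
  measurable_fun setT (fun t => complex.Im (g t)).

Lemma cm_ext f g : f =1 g -> cm f -> cm g.
Proof. by move=> /funext ->. Qed.

Arguments cm_ext {f g}.
Lemma cm_cst (c : C) : cm (fun _ => c).
Proof. by split; apply: measurable_cst. Qed.

Lemma cm_add f g : cm f -> cm g -> cm (fun t => f t + g t).
Proof.
move=> [f1 f2] [g1 g2]; split.
  have -> : (fun t => complex.Re (f t + g t)) = (fun t => complex.Re (f t) + complex.Re (g t)).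
    by apply/funext => t; case: (f t); case: (g t).
  exact: measurable_funD.
have -> : (fun t => complex.Im (f t + g t)) = (fun t => complex.Im (f t) + complex.Im (g t)).
  by apply/funext => t; case: (f t); case: (g t).
exact: measurable_funD.
Qed.

Lemma cm_mul f g : cm f -> cm g -> cm (fun t => f t * g t).
Proof.
move=> [f1 f2] [g1 g2]; split.
  have -> : (fun t => complex.Re (f t * g t)) = (fun t =>
     complex.Re (f t) * complex.Re (g t) - complex.Im (f t) * complex.Im (g t)).
    by apply/funext => t; case: (f t); case: (g t).
  by apply: measurable_funB; apply: measurable_funM.
have -> : (fun t => complex.Im (f t * g t)) = (fun t =>
   complex.Re (f t) * complex.Im (g t) + complex.Im (f t) * complex.Re (g t)).
  by apply/funext => t; case: (f t) => a b; case: (g t) => c e /=.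
by apply: measurable_funD; apply: measurable_funM.
Qed.

Lemma cm_conj f : cm f -> cm (fun t => conjc (f t)).
Proof.
move=> [f1 f2]; split.
  have -> : (fun t => complex.Re (conjc (f t))) = (fun t => complex.Re (f t)).
    by apply/funext => t; case: (f t).
  by [].
have -> : (fun t => complex.Im (conjc (f t))) = (fun t => - complex.Im (f t)).
  by apply/funext => t; case: (f t).
exact: measurable_funN.
Qed.

Arguments cm_add {f g}.
Arguments cm_mul {f g}.
Arguments cm_conj {f}.
Lemma cm_sum I (s : seq I) (g : I -> T -> C) : (forall i, cm (g i)) ->
  cm (fun t => \sum_(i <- s) g i t).
Proof.
move=> hg; elim: s => [|x s IH].
  by apply: (cm_ext _ (cm_cst 0)) => t /=; rewrite big_nil.
apply: (cm_ext _ (cm_add (hg x) IH)) => t; by rewrite big_cons.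
Qed.

Lemma cm_qexp (M : 'M[C]_d) : cm (fun t => qexp (psi t) M).
Proof.
have E : (fun t => \sum_k (\sum_j conjc (psi t j 0) * M j k) * psi t k 0) =1
         (fun t => qexp (psi t) M).
  move=> t; rewrite /qexp !mxE; apply: eq_bigr => k _; rewrite !mxE; congr (_ * _).
  by apply: eq_bigr => j _; rewrite !mxE.
apply: (cm_ext E); apply: cm_sum => k; apply: cm_mul; last exact: hm.
apply: cm_sum => j; apply: cm_mul; last exact: cm_cst.
by apply: cm_conj; apply: hm.
Qed.

Lemma int1 (f : T -> R) : measurable_fun setT f -> (forall t, `|f t| <= 1) ->
  P.-integrable setT (EFin \o f).
Proof.
move=> mf hb; apply: measurable_bounded_integrable => //.
  by move: (@probability_setT _ _ _ P) => /= ->; rewrite ltry.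
exists 1; split; first by rewrite num_real.
by move=> M hM t _ /=; apply: le_trans (hb t) (ltW hM).
Qed.

Lemma Rint_cst (r : R) : Rintegral P setT (fun _ => r) = r.
Proof. by rewrite Rintegral_cst //; move: (@probability_setT _ _ _ P) => /= ->; rewrite /= mulr1. Qed.

Lemma intD (f g : T -> R) : P.-integrable setT (EFin \o f) -> P.-integrable setT (EFin \o g) ->
  P.-integrable setT (EFin \o (fun t => f t + g t)).
Proof.
move=> hf hg; have -> : EFin \o (fun t => f t + g t) = (EFin \o f) \+ (EFin \o g).
  by apply/funext => t /=; rewrite EFinD.
exact: integrableD.
Qed.

Lemma intZ (a : R) (f : T -> R) : P.-integrable setT (EFin \o f) ->
  P.-integrable setT (EFin \o (fun t => a * f t)).
Proof.
move=> hf; have -> : EFin \o (fun t => a * f t) = (fun t => a%:E * (EFin \o f) t)%E.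
  by apply/funext => t /=; rewrite EFinM.
exact: integrableZl.
Qed.

Lemma intC (a : R) : P.-integrable setT (EFin \o (fun _ : T => a)).
Proof.
apply: measurable_bounded_integrable => //; first by move: (@probability_setT _ _ _ P) => /= ->; rewrite ltry.
exact: bounded_cst.
Qed.

Lemma Rint_sum I (s : seq I) (f : I -> T -> R) :
  (forall i, P.-integrable setT (EFin \o f i)) ->
  P.-integrable setT (EFin \o (fun t => \sum_(i <- s) f i t)) /\
  Rintegral P setT (fun t => \sum_(i <- s) f i t) = \sum_(i <- s) Rintegral P setT (f i).
Proof.
move=> hf; elim: s => [|x s [IH1 IH2]].
  under eq_fun do rewrite big_nil.
  by rewrite big_nil Rint_cst; split => //; apply: intC.
under eq_fun do rewrite big_cons.
split; first exact: intD.
by rewrite RintegralD // IH2 big_cons.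
Qed.

Lemma Rint_lin (a b c : R) (f g : T -> R) :
  P.-integrable setT (EFin \o f) -> P.-integrable setT (EFin \o g) ->
  Rintegral P setT (fun t => a + b * f t + c * g t) =
  a + b * Rintegral P setT f + c * Rintegral P setT g.
Proof.
move=> hf hg.
rewrite RintegralD //; last exact: intZ.
  rewrite RintegralD //; [|exact: intC|exact: intZ].
  by rewrite Rint_cst !RintegralZl.
by apply: intD; [exact: intC|exact: intZ].
Qed.

Lemma mpcond (M : mproc R d) (b : 'I_(mp_m M)) :
  measurable_fun setT (fun t => pcond (psi t) b).
Proof. exact: (cm_qexp (povm b)).1. Qed.

Lemma int_pcond {M : mproc R d} (hv : valid_mproc M) (b : 'I_(mp_m M)) :
  P.-integrable setT (EFin \o (fun t => pcond (psi t) b)).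
Proof.
apply: int1; first exact: mpcond.
by move=> t; rewrite ger0_norm ?pcond_ge0 // pcond_le1.
Qed.

Lemma int_xlogx {M : mproc R d} (hv : valid_mproc M) (b : 'I_(mp_m M)) :
  P.-integrable setT (EFin \o (fun t => xlogx (pcond (psi t) b))).
Proof.
apply: int1.
  rewrite /xlogx; apply: measurable_funM; first exact: mpcond.
  apply: measurableT_comp; [exact: measurable_ln | exact: mpcond].
by move=> t; apply: xlogx_bnd; rewrite pcond_ge0 pcond_le1.
Qed.

Lemma int_sq {M : mproc R d} (hv : valid_mproc M) (b : 'I_(mp_m M)) (i : 'I_(mp_k b)) :
  P.-integrable setT (EFin \o (fun t => sqmod (qexp (psi t) (mp_A i)))).
Proof.
apply: int1.
  rewrite /sqmod; have [h1 h2] := cm_qexp (mp_A i).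
  by apply: measurable_funD; apply: measurable_funX.
move=> t; rewrite ger0_norm ?sqmod_ge0 //.
by apply: (le_trans (@sqmod_le_pcond _ _ M (psi t) b i (hu t))); apply: pcond_le1.
Qed.

Lemma int_S {M : mproc R d} (hv : valid_mproc M) :
  P.-integrable setT (EFin \o (fun t => \sum_(b < mp_m M) xlogx (pcond (psi t) b))).
Proof. exact: (@Rint_sum _ _ (fun b t => xlogx (pcond (psi t) b)) (int_xlogx hv)).1. Qed.

Lemma int_X {M : mproc R d} (hv : valid_mproc M) :
  P.-integrable setT (EFin \o (fun t =>
    \sum_(b < mp_m M) \sum_(i < mp_k b) sqmod (qexp (psi t) (mp_A i)))).
Proof.
have H : forall b : 'I_(mp_m M), P.-integrable setT
    (EFin \o (fun t => \sum_(i < mp_k b) sqmod (qexp (psi t) (mp_A i)))).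
  move=> b; exact: (@Rint_sum _ _ (fun i t => sqmod (qexp (psi t) (mp_A i))) (int_sq hv b)).1.
exact: (@Rint_sum _ _ _ H).1.
Qed.

Lemma pout_sum {M : mproc R d} (hv : valid_mproc M) :
  \sum_(b < mp_m M) pout P psi b = 1.
Proof.
rewrite /pout -(@Rint_sum _ _ (fun b t => pcond (psi t) b) (int_pcond hv)).2.
have -> : (fun t => \sum_(b < mp_m M) pcond (psi t) b) = (fun _ => 1).
  by apply/funext => t; exact: pcond_sum hv (hu t).
exact: Rint_cst.
Qed.

Lemma pout_ge0 (M : mproc R d) (b : 'I_(mp_m M)) : 0 <= pout P psi b.
Proof. by apply: Rintegral_ge0 => t _; apply: pcond_ge0. Qed.

Lemma dist_ge0 {M : mproc R d} (hv : valid_mproc M) : 0 <= avg_disturbance P psi M.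
Proof.
rewrite /avg_disturbance subr_ge0.
rewrite -[X in _ <= X](Rint_cst 1).
apply: le_Rintegral => //; [exact: int_X|exact: intC|].
by move=> t _; apply: dist_sum_le1.
Qed.

End Ana.

Section Fin.
Context {R : realType} {d : nat} {dT : measure_display} {T : measurableType dT}.
Variables (P : probability T R) (psi : T -> 'cV[R[i]]_d).
Hypothesis hu : forall t, adjmx (psi t) *m psi t = 1%:M.
Hypothesis hm : forall j : 'I_d,
     measurable_fun setT (fun t => complex.Re (psi t j 0)) /\
     measurable_fun setT (fun t => complex.Im (psi t j 0)).
Variables (lam : R) (M1 M2 : mproc R d).
Hypothesis hl : 0 <= lam <= 1.
Hypotheses (hv1 : valid_mproc M1) (hv2 : valid_mproc M2).

Let l0 : 0 <= lam. Proof. exact: lam_ge0 hl. Qed.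
Let l1 : 0 <= 1 - lam. Proof. exact: lamc_ge0 hl. Qed.

Lemma mix_ent (m1 m2 : nat) (F : 'I_(m1 + m2) -> R) (p1 : 'I_m1 -> R) (p2 : 'I_m2 -> R) :
  (forall b, F (lshift m2 b) = lam * p1 b) -> (forall b, F (rshift m1 b) = (1 - lam) * p2 b) ->
  (forall b, 0 <= p1 b) -> (forall b, 0 <= p2 b) ->
  \sum_b p1 b = 1 -> \sum_b p2 b = 1 ->
  \sum_b xlogx (F b) = (lam * ln lam + (1 - lam) * ln (1 - lam))
     + lam * \sum_b xlogx (p1 b) + (1 - lam) * \sum_b xlogx (p2 b).
Proof.
move=> e1 e2 g1 g2 s1 s2.
rewrite big_split_ord.
under eq_bigr do rewrite e1 xlogxM //.
under [X in _ + X = _]eq_bigr do rewrite e2 xlogxM //.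
rewrite !big_split /= -!mulr_suml -!mulr_sumr s1 s2 !mulr1.
ring.
Qed.

Let MM := @mixM R d lam M1 M2.

Lemma info_mix : info_gain P psi MM = lam * info_gain P psi M1 + (1 - lam) * info_gain P psi M2.
Proof.
have eHB : H_B P psi MM = - (lam * ln lam + (1 - lam) * ln (1 - lam))
    + lam * H_B P psi M1 + (1 - lam) * H_B P psi M2.
  rewrite /H_B (@mix_ent _ _ _ (fun b => pout P psi b) (fun b => pout P psi b)).
  - ring.
  - move=> b; rewrite /pout.
    have -> : (fun t => pcond (M:=MM) (psi t) (lshift (mp_m M2) b)) =
              (fun t => lam * pcond (psi t) b).
      by apply/funext => t; rewrite /MM pcond_mixL.
    by rewrite RintegralZl //; exact: int_pcond.
  - move=> b; rewrite /pout.
    have -> : (fun t => pcond (M:=MM) (psi t) (rshift (mp_m M1) b)) =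
              (fun t => (1 - lam) * pcond (psi t) b).
      by apply/funext => t; rewrite /MM pcond_mixR.
    by rewrite RintegralZl //; exact: int_pcond.
  - by move=> b; apply: pout_ge0.
  - by move=> b; apply: pout_ge0.
  - exact: pout_sum.
  - exact: pout_sum.
have eHP : H_B_Psi P psi MM = - (lam * ln lam + (1 - lam) * ln (1 - lam))
    + lam * H_B_Psi P psi M1 + (1 - lam) * H_B_Psi P psi M2.
  rewrite /H_B_Psi.
  have -> : (fun t => \sum_(b < mp_m MM) xlogx (pcond (psi t) b)) =
     (fun t => (lam * ln lam + (1 - lam) * ln (1 - lam))
        + lam * (\sum_(b < mp_m M1) xlogx (pcond (psi t) b))
        + (1 - lam) * (\sum_(b < mp_m M2) xlogx (pcond (psi t) b))).
    apply/funext => t; apply: mix_ent.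
    - by move=> b; rewrite /MM pcond_mixL.
    - by move=> b; rewrite /MM pcond_mixR.
    - by move=> b; apply: pcond_ge0.
    - by move=> b; apply: pcond_ge0.
    - exact: pcond_sum.
    - exact: pcond_sum.
  rewrite Rint_lin //; [ring|exact: int_S|exact: int_S].
rewrite /info_gain eHB eHP; ring.
Qed.

Lemma dist_mix_eq : avg_disturbance P psi MM =
  lam * avg_disturbance P psi M1 + (1 - lam) * avg_disturbance P psi M2.
Proof.
rewrite /avg_disturbance.
have -> : (fun t => \sum_(b < mp_m MM) \sum_(i < mp_k b) sqmod (qexp (psi t) (mp_A i))) =
   (fun t => 0 + lam * (\sum_(b < mp_m M1) \sum_(i < mp_k b) sqmod (qexp (psi t) (mp_A i)))
     + (1 - lam) * (\sum_(b < mp_m M2) \sum_(i < mp_k b) sqmod (qexp (psi t) (mp_A i)))).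
  by apply/funext => t; rewrite add0r /MM dist_mix.
rewrite Rint_lin //; [ring|exact: int_X|exact: int_X].
Qed.

Lemma valid_MM : valid_mproc MM.
Proof. exact: valid_mix. Qed.

End Fin.

Theorem mainTheorem1 (R : realType) (d : nat) (dT : measure_display)
  (T : measurableType dT) (P : probability T R) (psi : T -> 'cV[R[i]]_d)
  (psi_unit : forall t, adjmx (psi t) *m psi t = 1%:M)
  (psi_meas : forall j : 'I_d,
     measurable_fun setT (fun t => complex.Re (psi t j 0)) /\
     measurable_fun setT (fun t => complex.Im (psi t j 0))) :
  (forall (I1 I2 lam : R), achievable P psi I1 -> achievable P psi I2 ->
     0 <= lam <= 1 -> achievable P psi (lam * I1 + (1 - lam) * I2)) /\
  (forall (I1 I2 lam : R), achievable P psi I1 -> achievable P psi I2 ->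
     0 <= lam <= 1 ->
     frontier P psi (lam * I1 + (1 - lam) * I2)
       <= lam * frontier P psi I1 + (1 - lam) * frontier P psi I2).
Proof.
have key := info_mix P psi psi_unit psi_meas.
have keyD := dist_mix_eq P psi psi_unit psi_meas.
split.
  move=> I1 I2 lam [M1 [v1 <-]] [M2 [v2 <-]] hl.
  exists (mixM R d lam M1 M2); split; first exact: valid_MM.
  exact: key.
move=> I1 I2 lam A1 A2 hl.
have [->|lam0] := eqVneq lam 0.
  by rewrite !mul0r !add0r subr0 !mul1r.
have [->|lam1] := eqVneq lam 1.
  by rewrite subrr !mul0r !addr0 !mul1r.
have lp : 0 < lam by case/andP: hl => h _; rewrite lt_def lam0.
have lq : 0 < 1 - lam.
  by case/andP: hl => _ h; rewrite subr_gt0 lt_def h eq_sym lam1.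
set S := fun I => [set avg_disturbance P psi M | M in
   [set M : mproc R d | valid_mproc M /\ info_gain P psi M = I]].
have fE : forall I, frontier P psi I = inf (S I) by [].
have lbS : forall I, has_lbound (S I).
  move=> I; exists 0 => y [M [hv _] <-].
  exact: (@dist_ge0 _ _ _ _ P psi psi_unit psi_meas _ hv).
have neS : forall I, achievable P psi I -> S I !=set0.
  by move=> I [M [hv hI]]; exists (avg_disturbance P psi M); exists M.
set I := lam * I1 + (1 - lam) * I2.
have step1 : forall D1 D2, S I1 D1 -> S I2 D2 -> inf (S I) <= lam * D1 + (1 - lam) * D2.
  move=> D1 D2 [M1 [v1 i1] <-] [M2 [v2 i2] <-].
  apply: (ge_inf (lbS I)).
  exists (mixM R d lam M1 M2); last exact: keyD.
  split; first exact: valid_MM.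
  by rewrite key // i1 i2.
have step2 : forall D2, S I2 D2 -> inf (S I) <= lam * inf (S I1) + (1 - lam) * D2.
  move=> D2 h2.
  have : (inf (S I) - (1 - lam) * D2) / lam <= inf (S I1).
    apply: lb_le_inf; first exact: neS.
    move=> D1 h1; rewrite ler_pdivrMr //.
    have := step1 D1 D2 h1 h2; lra.
  rewrite ler_pdivrMr // => h; lra.
rewrite !fE.
have : (inf (S I) - lam * inf (S I1)) / (1 - lam) <= inf (S I2).
  apply: lb_le_inf; first exact: neS.
  move=> D2 h2; rewrite ler_pdivrMr //.
  have := step2 D2 h2; lra.
rewrite ler_pdivrMr // => h; lra.
Qed.
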